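(* For all integers $n\ge0$ and $0\le k\le n$, $$\sum_{i=0}^{\lfloor\frac{n+1}{2}\rfloor}\frac{(-1)^i}{n+1-i}\binom{n+1-i}{i}\binom{2n-2k-2i}{n-k-i} = \frac{(-1)^{n-k}}{n+1}\binom{k}{n-k}.$$ In particular the left-hand side vanishes when $2k<n$.
   Context: Binomial coefficients use the convention $\binom{a}{b}=0$ if $b<0$ or $b>a$ (in particular $\binom{2m}{m}=0$ for $m<0$). *)

(* Defs.v *)
From HB Require Import structures.
From mathcomp Require Import all_boot all_order all_algebra.
Set Implicit Arguments. Unset Strict Implicit. Unset Printing Implicit Defensive.
Import Order.TTheory GRing.Theory Num.Theory.
Local Open Scope ring_scope.

Definition binZ (a b : int) : rat :=
  if (0 <= b) && (b <= a) then ('C(`|a|%N, `|b|%N))%:R else 0.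

(* Main.v *)
Require Import Defs.
From HB Require Import structures.
From mathcomp Require Import all_boot all_order all_algebra.
From mathcomp Require Import zify ring lra.
Import Order.TTheory GRing.Theory Num.Theory.
Local Open Scope ring_scope.

Fixpoint Lc (N i : nat) : nat :=
  match N with
  | 0 => if i is 0 then 2 else 0
  | 1 => if i is 0 then 1 else 0
  | S ((S N'') as N') => match i with 0 => 1 | S i' => (Lc N' (S i') + Lc N'' i')%N end
  end.

Lemma LcSS N i : Lc N.+2 i.+1 = (Lc N.+1 i.+1 + Lc N i)%N.
Proof. by []. Qed.

Lemma Lc_zero N i : (0 < i)%N -> (N <= i)%N -> Lc N i = 0%N.
Proof.
elim: N {-2}N (leqnn N) i => [|M IH] N hN i.
  by move: hN; rewrite leqn0 => /eqP -> ; case: i.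
case: N hN => [|[|P]] hN; first by case: i.
  by case: i.
case: i => [//|i] _ hi; rewrite LcSS.
rewrite (IH P.+1) ?(IH P) //; lia.
Qed.

Lemma Lc0 N : (0 < N)%N -> Lc N 0 = 1%N.
Proof. by case: N => [|[|]]. Qed.

Lemma Lc_closed N i : (i < N)%N ->
  (Lc N i)%:R = N%:R / (N - i)%:R * ('C(N - i, i))%:R :> rat.
Proof.
suff H : forall N, (forall i, (i < N)%N -> (Lc N i)%:R = N%:R / (N - i)%:R * ('C(N - i, i))%:R :> rat)
  /\ (forall i, (i < N.+1)%N -> (Lc N.+1 i)%:R = N.+1%:R / (N.+1 - i)%:R * ('C(N.+1 - i, i))%:R :> rat).
  by case: (H N) => h _; apply: h.
clear N i; elim=> [|N [IH1 IH2]]; split => //.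
- by case=> // _; rewrite /= divrr ?unitfE // bin0 mulr1.
- case=> [_|i hi].
    by rewrite Lc0 // subn0 bin0 divrr ?mulr1 // unitfE pnatr_eq0.
  rewrite LcSS natrD.
  have [->|hiN] := eqVneq i N.
    rewrite Lc_zero // subSS subSn // subnn.
    case: N {IH1 IH2 hi} => [|N]; first by rewrite /= divr1; rewrite mulr1.
    by rewrite Lc_zero //= mulr0 add0r.
  have hiN' : (i < N)%N by lia.
  rewrite IH2 // IH1 //.
  have [a ha] : exists a, N = (a.+1 + i)%N by exists (N - i).-1; lia.
  subst N.
  have -> : ((a.+1 + i).+1 - i.+1 = a.+1)%N by lia.
  have -> : ((a.+1 + i) - i = a.+1)%N by lia.
  have -> : ((a.+1 + i).+2 - i.+1 = a.+2)%N by lia.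
  have h1 : 'C(a.+2, i.+1) = ('C(a.+1, i.+1) + 'C(a.+1, i))%N by rewrite binS.
  have h2 : (a.+2 * 'C(a.+1, i) = i.+1 * 'C(a.+2, i.+1))%N by rewrite -mul_bin_diag.
  move: h1 h2.
  set c := 'C(a.+1, i); set c1 := 'C(a.+1, i.+1); set c2 := 'C(a.+2, i.+1).
  move=> h1 h2; clearbody c c1 c2.
  have h1' : c1%:R = c2%:R - c%:R :> rat by rewrite h1 natrD addrK.
  have h2' : (a.+2)%:R * c%:R = (i.+1)%:R * c2%:R :> rat by rewrite -!natrM h2.
  rewrite h1'; clear h1 h2 hi hiN hiN' IH1 IH2.
  have e n : n.+1%:R = n%:R + 1 :> rat by rewrite -addn1 natrD.
  move: h2'; rewrite !e !natrD ?e.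
  have hA : 0 <= a%:R :> rat by apply: ler0n.
  have hI : 0 <= i%:R :> rat by apply: ler0n.
  move=> h2'.
  have hC2 : c2%:R = (a%:R + 1 + 1) * c%:R / (i%:R + 1) :> rat.
    by rewrite h2' mulrC mulrA mulVf ?mul1r //; lra.
  rewrite hC2.
  field; lra.
Qed.

Definition D (m i : nat) : rat := ('C((2 * (m - i))%N, m - i))%:R.
Definition F (N m : nat) : rat := \sum_(i < m.+1) (-1)^+i * (Lc N i)%:R * D m i.
Definition G (N m : nat) : rat :=
  if (m < N)%N then (-1)^+m * ('C(N.-1 - m, m))%:R else 2 * ('C((2 * m - N)%N, m))%:R.

Lemma F_rec P q : F P.+2 q.+1 = F P.+1 q.+1 - F P q.
Proof.
rewrite /F [X in X = _]big_ord_recl [X in _ = X - _]big_ord_recl !Lc0 //.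
rewrite (eq_bigr (fun j : 'I_q.+1 => (-1)^+j.+1 * (Lc P.+1 j.+1)%:R * D q j - (-1)^+j * (Lc P j)%:R * D q j)); last first.
  move=> j _; have -> : (lift ord0 j : nat) = j.+1 by []. rewrite LcSS natrD /D subSS exprS; ring.
rewrite sumrB addrA; congr (_ + _ - _).
Qed.

Lemma G_rec P q : G P.+2 q.+1 = G P.+1 q.+1 - G P q.
Proof.
rewrite /G /=.
have [hqP|hPq|->] := ltngtP q P.
- have -> : (q.+1 < P.+2)%N by lia.
  have -> : (q.+1 < P.+1)%N by lia.
  have [r ->] : exists r, P = (q + r.+1)%N by exists (P - q).-1; lia.
  have -> : ((q + r.+1).+1 - q.+1 = r.+1)%N by lia.
  have -> : ((q + r.+1) - q.+1 = r)%N by lia.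
  have -> : ((q + r.+1).-1 - q = r)%N by lia.
  rewrite binS natrD exprS; ring.
- have -> : (q.+1 < P.+2)%N = false by lia.
  have -> : (q.+1 < P.+1)%N = false by lia.
  have [r ->] : exists r, q = (P + r.+1)%N by exists (q - P).-1; lia.
  have -> : (2 * (P + r.+1).+1 - P.+2 = (P + r.+1) + r.+1)%N by lia.
  have -> : (2 * (P + r.+1).+1 - P.+1 = ((P + r.+1) + r.+1).+1)%N by lia.
  have -> : (2 * (P + r.+1) - P = (P + r.+1) + r.+1)%N by lia.
  rewrite binS natrD; ring.
- have -> : (P.+1 < P.+2)%N by lia.
  have -> : (P.+1 < P.+1)%N = false by lia.
  have -> : (P.+1 - P.+1 = 0)%N by lia.
  have -> : (2 * P.+1 - P.+1 = P.+1)%N by lia.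
  have -> : (2 * P - P = P)%N by lia.
  by rewrite !binn bin0n /= mulr0 subrr.
Qed.

Lemma F_small N m : (N <= 1)%N -> F N m = (2 - N%:R) * ('C((2 * m)%N, m))%:R.
Proof.
move=> hN; rewrite /F big_ord_recl big1 ?addr0; last first.
  move=> j _; have -> : (lift ord0 j : nat) = j.+1 by [].
  by case: N hN => [|[|]] //= _; rewrite mulr0 mul0r.
rewrite /D subn0 expr0 mul1r.
by case: N hN => [|[|]] //= _; congr (_ * _).
Qed.

Lemma FG N m : F N m = G N m.
Proof.
elim: N {-2}N (leqnn N) m => [|M IH] N hN m.
  move: hN; rewrite leqn0 => /eqP ->.
  by rewrite F_small // /G /= subn0.
case: N hN => [|[|P]] hN.
- by rewrite F_small // /G /= subn0.
- rewrite F_small // /G; case: m => [|q] /=; first by rewrite /=; lra.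
  have -> : (2 * q.+1 - 1 = (2 * q).+1)%N by lia.
  have -> : (2 * q.+1 = (2 * q).+2)%N by lia.
  have e : 'C((2 * q).+1, q) = 'C((2 * q).+1, q.+1).
    by rewrite -bin_sub; [congr 'C(_, _); lia | lia].
  rewrite binS natrD e.
  have -> : (2 - 1%:R : rat) = 1 by lra.
  rewrite mul1r; lra.
- case: m => [|q].
    by rewrite /F /G big_ord1 /D /= !bin0 mulr1.
  by rewrite F_rec G_rec !IH //; lia.
Qed.

Lemma binZ_nat a b : binZ a%:Z b%:Z = ('C(a, b))%:R.
Proof.
rewrite /binZ lez_nat /=; case: leqP => // h.
by rewrite bin_small.
Qed.

Lemma sum_trunc (f : nat -> rat) a b : (forall i, (a <= i)%N -> f i = 0) -> (a <= b)%N ->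
  \sum_(0 <= i < b) f i = \sum_(0 <= i < a) f i.
Proof.
move=> hf hab; rewrite (big_cat_nat _ (n := a)) //= [X in _ + X]big1_seq ?addr0 //.
by move=> i; rewrite mem_index_iota /= => /andP [hi _]; apply: hf.
Qed.

Lemma Lc_half N i : (N./2 < i)%N -> Lc N i = 0%N.
Proof.
move=> hi; have [hiN|hNi] := ltnP i N; last by apply: Lc_zero => //; lia.
have := @Lc_closed N i hiN; rewrite bin_small; last by lia.
rewrite mulr0 => /eqP; rewrite pnatr_eq0 => /eqP //.
Qed.

Theorem mainTheorem13 (n k : nat) (hk : (k <= n)%N) :
  \sum_(0 <= i < ((n + 1)./2).+1)
     ((-1) ^+ i / ((n%:Z + 1 - i%:Z)%:~R : rat)
        * binZ (n%:Z + 1 - i%:Z) i%:Z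
        * binZ (2 * (n%:Z - k%:Z - i%:Z)) (n%:Z - k%:Z - i%:Z))
  = (-1) ^+ (n - k) / (n.+1)%:R * binZ k%:Z (n%:Z - k%:Z)
  /\ ((k.*2 < n)%N ->
      \sum_(0 <= i < ((n + 1)./2).+1)
        ((-1) ^+ i / ((n%:Z + 1 - i%:Z)%:~R : rat)
           * binZ (n%:Z + 1 - i%:Z) i%:Z
           * binZ (2 * (n%:Z - k%:Z - i%:Z)) (n%:Z - k%:Z - i%:Z)) = 0).
Proof.
set m := (n - k)%N.
set g := fun i => (-1) ^+ i * (Lc n.+1 i)%:R * (if (i <= m)%N then D m i else 0).
have key : \sum_(0 <= i < ((n + 1)./2).+1)
     ((-1) ^+ i / ((n%:Z + 1 - i%:Z)%:~R : rat)
        * binZ (n%:Z + 1 - i%:Z) i%:Z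
        * binZ (2 * (n%:Z - k%:Z - i%:Z)) (n%:Z - k%:Z - i%:Z))
   = (n.+1%:R)^-1 * \sum_(0 <= i < ((n + 1)./2).+1) g i.
  rewrite big_distrr /=; apply: eq_big_nat => i /andP [_ hi].
  have hiN : (i < n.+1)%N by rewrite addn1 in hi; lia.
  have -> : n%:Z + 1 - i%:Z = (n.+1 - i)%N by lia.
  rewrite binZ_nat /g Lc_closed //.
  case: (leqP i m) => him.
    have -> : (n%:Z - k%:Z - i%:Z) = (m - i)%N by rewrite /m; lia.
    have -> : 2 * ((m - i)%N : int) = (2 * (m - i))%N by lia.
    rewrite binZ_nat /D.
    have -> : ((n.+1 - i)%N%:~R : rat) = (n.+1 - i)%:R by [].
    have hx : ((n.+1 - i)%:R : rat) != 0 by rewrite pnatr_eq0; lia.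
    have hN : (n.+1%:R : rat) != 0 by rewrite pnatr_eq0.
    field; by rewrite hx addrC natr1 pnatr_eq0.
  rewrite /binZ.
  have -> : (0 <= n%:Z - k%:Z - i%:Z) = false by rewrite /m in him; lia.
  by rewrite /= !mulr0.
have hg1 : forall i, (((n + 1)./2).+1 <= i)%N -> g i = 0.
  by move=> i hi; rewrite /g Lc_half ?mulr0 ?mul0r //; rewrite addn1 in hi; lia.
have hg2 : forall i, (m.+1 <= i)%N -> g i = 0.
  move=> i hi; rewrite /g; case: leqP => h; last by rewrite mulr0.
  lia.
have Fm : \sum_(0 <= i < ((n + 1)./2).+1) g i = F n.+1 m.
  rewrite -(@sum_trunc g _ (((n + 1)./2).+1 + m.+1)) //; last by lia.
  rewrite (@sum_trunc g (m.+1)) //; last by lia.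
  rewrite big_mkord /F; apply: eq_bigr => i _.
  by rewrite /g; have -> : (i <= m)%N by have := ltn_ord i; lia.
have main : \sum_(0 <= i < ((n + 1)./2).+1)
     ((-1) ^+ i / ((n%:Z + 1 - i%:Z)%:~R : rat)
        * binZ (n%:Z + 1 - i%:Z) i%:Z
        * binZ (2 * (n%:Z - k%:Z - i%:Z)) (n%:Z - k%:Z - i%:Z))
  = (-1) ^+ (n - k) / (n.+1)%:R * binZ k%:Z (n%:Z - k%:Z).
  rewrite key Fm FG /G.
  have -> : (m < n.+1)%N by rewrite /m; lia.
  have -> : (n.+1.-1 - m = k)%N by rewrite /m /=; lia.
  have -> : n%:Z - k%:Z = m%:Z by rewrite /m; lia.
  by rewrite binZ_nat -/m; ring.
split => // hkn.
rewrite main.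
have -> : n%:Z - k%:Z = m%:Z by rewrite /m; lia.
by rewrite binZ_nat bin_small ?mulr0 //; rewrite /m; lia.
Qed.
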